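(* Let $M/K$ be obtained by strong cluster magnification from a subextension $L/K$ with magnification factor $d$. Then $t_K(M)=d\,t_K(L)$ and $u_K(M)=u_K(L)$.
   Context: $K$ is a perfect field with a fixed algebraic closure $\bar K$; all extensions finite inside $\bar K$; $\tilde L$ is the Galois closure of $L/K$. Strong cluster magnification: $M/K$ is obtained by strong cluster magnification from $L/K$ ($K\subseteq L\subseteq M$) if $[L:K]>2$ and there is a finite Galois $F/K$ with $\tilde L$ and $F$ linearly disjoint over $K$ and $LF=M$; $d=[F:K]$ is the magnification factor. For a finite extension $P/K$, let $F_P$ be the unique subfield of $P$ Galois over $K$ of maximum possible degree; the ascending index is $t_K(P)=[F_P:K]$ and $u_K(P)=[P:F_P]$. *)

(* Defs.v *)
(* field extensions as subfields of an ambient splitting field. *)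
From HB Require Import structures.
From mathcomp Require Import all_boot all_order all_algebra all_field.
Set Implicit Arguments. Unset Strict Implicit. Unset Printing Implicit Defensive.
Import GRing.Theory.
Local Open Scope ring_scope.

Section Defs.
Variables (F0 : fieldType) (Om : splittingFieldType F0).
Implicit Types K L M E P F Lt FP A B : {subfield Om}.

(* K is a perfect field: char 0, or char p > 0 with Frobenius surjective on K *)
Definition perfect_subfield K : Prop :=
  forall p : nat, p \in [pchar Om] ->
    forall x, x \in K -> exists2 y, y \in K & y ^+ p = x.

Definition is_galois_closure K L Lt : Prop :=
  [/\ (L <= Lt)%VS, galois K Lt &
      forall E, (L <= E)%VS -> galois K E -> (Lt <= E)%VS].

Definition linearly_disjoint K (A B : {subfield Om}) : Prop :=
  [/\ (K <= A)%VS, (K <= B)%VS &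
      \dim_K (A * B)%AS = (\dim_K A * \dim_K B)%N].

(* M/K is obtained from L/K by strong cluster magnification via the finite
   Galois extension F/K (magnification factor [F:K]). *)
Definition strong_cluster_magnification K L M F : Prop :=
  [/\ (K <= L)%VS /\ (L <= M)%VS, (2 < \dim_K L)%N, galois K F,
      (forall Lt, is_galois_closure K L Lt -> linearly_disjoint K Lt F) &
      (L * F)%AS = M].

Definition is_max_galois_sub K P FP : Prop :=
  [/\ (FP <= P)%VS, galois K FP &
      forall E, (E <= P)%VS -> galois K E -> (\dim_K E <= \dim_K FP)%N].

Definition t_index K FP : nat := \dim_K FP.
Definition u_index P FP : nat := \dim_FP P.

End Defs.

(* Main.v *)
Require Import Defs.
From HB Require Import structures.
From mathcomp Require Import all_boot all_order all_algebra all_fingroup all_field.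
From mathcomp Require Import zify ring.
Set Implicit Arguments. Unset Strict Implicit. Unset Printing Implicit Defensive.
Import GRing.Theory.
Local Open Scope ring_scope.

Section Aux.
Variables (F0 : fieldType) (Om : splittingFieldType F0).
Implicit Types K L M E X Y : {subfield Om}.

Lemma perfect_sep K : perfect_subfield K -> forall x : Om, separable_element K x.
Proof.
move=> perK x; apply/negPn/negP => /separablePn_pchar [p pchp [g Kg Dm]].
have p_pr := pcharf_prime pchp; have p_gt1 := prime_gt1 p_pr.
have exP i : exists y, (y \in K) && (y ^+ p == g`_i).
  have [y Ky Dy] := perK p pchp _ (polyOverP Kg i).
  by exists y; rewrite Ky Dy eqxx.
pose c i := xchoose (exP i).
have cP i : (c i \in K) && (c i ^+ p == g`_i) := xchooseP (exP i).
pose h := \poly_(i < size g) c i.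
have hK : h \is a polyOver K.
  by apply/polyOver_poly => i _; case/andP: (cP i).
have pchP : p \in [pchar {poly Om}] := rmorph_pchar polyC pchp.
have Dhp : h ^+ p = minPoly K x.
  rewrite Dm /h poly_def comp_polyE -(pFrobenius_autE pchP) rmorph_sum.
  apply: eq_bigr => i _ /=; rewrite pFrobenius_autE exprZn -!exprM mulnC.
  by case/andP: (cP i) => _ /eqP ->.
have hx : root h x.
  have : (h ^+ p).[x] == 0 by rewrite Dhp minPolyxx.
  by rewrite horner_exp expf_eq0 => /andP[].
have hnz : h != 0.
  apply: contraTneq (monic_minPoly K x) => h0.
  by rewrite -Dhp h0 expr0n gtn_eqF ?prime_gt0 // monicE lead_coef0 eq_sym oner_eq0.
have le := dvdp_leq hnz (minPoly_dvdp hK hx).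
have := size_exp h p; rewrite Dhp size_minPoly /= => Es.
move: le; rewrite size_minPoly.
have d_gt0 : (0 < adjoin_degree K x)%N.
  by rewrite adjoin_degreeE divn_gt0 ?adim_gt0 // dimvS // subv_adjoin.
move: Es d_gt0; case: (size h) => [|s] /=; first lia.
move=> ->; have : (s * 2 <= s * p)%N by rewrite leq_mul2l p_gt1 orbT.
lia.
Qed.


Local Open Scope group_scope.
Variables (K : {subfield Om}) (galK : galois K {:Om}%AS).

Lemma galF X : (K <= X)%VS -> galois X {:Om}%AS.
Proof. by move=> sKX; apply: galoisS galK; rewrite sKX subvf. Qed.

Lemma fixG X : (K <= X)%VS -> fixedField 'Gal({:Om}%AS / X) = X.
Proof. by move=> sKX; apply/galois_fixedField/galF. Qed.

Lemma cardG X : (K <= X)%VS -> #|'Gal({:Om}%AS / X)| = (\dim {:Om}%AS %/ \dim X)%N.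
Proof. by move=> sKX; rewrite -galois_dim // galF. Qed.

Lemma normG X : galois K X -> 'Gal({:Om}%AS / X) <| 'Gal({:Om}%AS / K).
Proof.
case/and3P=> sKX _ nKX; apply: normalField_normal nKX.
by rewrite sKX subvf.
Qed.

Lemma galMG X Y : (K <= X)%VS -> (K <= Y)%VS ->
  'Gal({:Om}%AS / (X * Y)%AS) = 'Gal({:Om}%AS / X) :&: 'Gal({:Om}%AS / Y).
Proof.
move=> sKX sKY; apply/eqP; rewrite eqEsubset subsetI !galS ?field_subvMr ?field_subvMl //=.
rewrite (galois_connection _ (subvf _)) prodv_sub //.
  by rewrite -{1}(fixG sKX) fixedFieldS // subsetIl.
by rewrite -{1}(fixG sKY) fixedFieldS // subsetIr.
Qed.

Lemma galCapG X Y : (K <= X)%VS -> (K <= Y)%VS ->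
  'Gal({:Om}%AS / (X :&: Y)%AS) = ('Gal({:Om}%AS / X) <*> 'Gal({:Om}%AS / Y))%G.
Proof.
move=> sKX sKY.
have -> : (X :&: Y)%AS = fixedField_aspace ('Gal({:Om}%AS / X) <*> 'Gal({:Om}%AS / Y))%G.
  apply/val_inj/eqP; rewrite /= eqEsubv; apply/andP; split.
    rewrite -(galois_connection _ (subvf _)) join_subG !galS ?capvSl ?capvSr //.
  rewrite subv_cap; apply/andP; split.
    by rewrite -[X in (_ <= X)%VS](fixG sKX); apply: fixedFieldS; apply: joing_subl.
  by rewrite -[X in (_ <= X)%VS](fixG sKY); apply: fixedFieldS; apply: joing_subr.
exact: gal_fixedField.
Qed.


Lemma gal_sub X : galois K X -> (K <= X)%VS.
Proof. by case/and3P. Qed.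

Lemma galois_prod X Y : galois K X -> galois K Y -> galois K (X * Y)%AS.
Proof.
move=> gX gY; have sKX := gal_sub gX; have sKY := gal_sub gY.
have sKXY : (K <= (X * Y)%AS)%VS := subv_trans sKX (field_subvMr X Y).
rewrite -(fixG sKXY) galMG //.
exact: (normal_fixedField_galois galK (normalI (normG gX) (normG gY))).
Qed.

Lemma galois_cap X Y : galois K X -> galois K Y -> galois K (X :&: Y)%AS.
Proof.
move=> gX gY; have sKX := gal_sub gX; have sKY := gal_sub gY.
have sKXY : (K <= (X :&: Y)%AS)%VS by rewrite /= subv_cap sKX sKY.
rewrite -(fixG sKXY) galCapG //.
exact: (normal_fixedField_galois galK (normalY (normG gX) (normG gY))).
Qed.

Lemma natirr X Y : galois K X -> (K <= Y)%VS ->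
  (\dim X * \dim Y = \dim (X * Y)%AS * \dim (X :&: Y)%AS)%N.
Proof.
move=> gX sKY; have sKX := gal_sub gX.
have sKXY : (K <= (X * Y)%AS)%VS := subv_trans sKX (field_subvMr X Y).
have sKcap : (K <= (X :&: Y)%AS)%VS by rewrite /= subv_cap sKX sKY.
have := mul_cardG ('Gal({:Om}%AS / X))%G ('Gal({:Om}%AS / Y))%G.
rewrite -norm_joinEr; last first.
  exact: subset_trans (galS _ sKY) (normal_norm (normG gX)).
rewrite -galCapG // -galMG // !cardG //.
have d (Z : {subfield Om}) : (\dim {:Om}%AS %/ \dim Z * \dim Z = \dim {:Om}%AS)%N.
  by rewrite divnK // field_dimS // subvf.
have n_gt0 : (0 < \dim {:Om}%AS)%N := adim_gt0 _.
move: (d X) (d Y) (d (X * Y)%AS) (d (X :&: Y)%AS) n_gt0.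
set n := \dim _; set A := (n %/ _)%N; set B := (n %/ _)%N; set C := (n %/ _)%N; set P := (n %/ _)%N.
move=> eA eB eC eP n0 E; clearbody n A B C P.
move: eA eB eC eP E; set x := \dim X; set y := \dim Y; set c := \dim (X * Y)%AS.
set p := \dim (X :&: Y)%AS => eA eB eC eP E.
have : (n * n * (x * y) = n * n * (c * p))%N.
  transitivity ((A * B) * (x * y) * (c * p))%N; last first.
    by rewrite -{1}eA -eB; ring.
  by rewrite E -{1}eC -eP; ring.
by move/eqP; rewrite eqn_pmul2l ?muln_gt0 ?n0 // => /eqP.
Qed.


Lemma closure_exists L : (K <= L)%VS -> exists Lt, is_galois_closure K L Lt.
Proof.
move=> sKL.
have nsC : gcore 'Gal({:Om}%AS / L) 'Gal({:Om}%AS / K) <| 'Gal({:Om}%AS / K).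
  by apply: gcore_normal; apply: galS.
exists (fixedField_aspace (gcore 'Gal({:Om}%AS / L) 'Gal({:Om}%AS / K))%G).
split.
- by rewrite /= -{1}(fixG sKL); apply: fixedFieldS; apply: gcore_sub.
- exact: (normal_fixedField_galois galK nsC).
move=> E sLE gE; rewrite /= -(fixG (gal_sub gE)); apply: fixedFieldS.
by rewrite sub_gcore ?(normal_norm (normG gE)) // galS.
Qed.

End Aux.

Lemma canc (a b c : nat) : (0 < c)%N -> (a * c)%N = (b * c)%N -> a = b.
Proof. by move=> c0 /eqP; rewrite eqn_pmul2r // => /eqP. Qed.

Theorem theorem9p4 (F0 : fieldType) (Om : splittingFieldType F0)
  (K L M F FL FM : {subfield Om}) :
  perfect_subfield K ->
  strong_cluster_magnification K L M F ->
  is_max_galois_sub K L FL ->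
  is_max_galois_sub K M FM ->
  t_index K FM = (\dim_K F * t_index K FL)%N /\ u_index M FM = u_index L FL.
Proof.
move=> perK [[sKL sLM] _ gF disj defM] [sFL_L gFL maxFL] [sFM_M gFM maxFM].
subst M.
have galK : galois K {:Om}%AS.
  rewrite /galois subvf normalFieldf /= andbT.
  by apply/separableP => y _; apply: perfect_sep.
have [Lt hLt] := closure_exists galK sKL.
have [sLLt gLt _] := hLt.
have [sKLt sKF dLtF] := disj Lt hLt.
have sKFL := gal_sub gFL; have sKFM := gal_sub gFM.
have dK (X : {subfield Om}) : (K <= X)%VS -> \dim X = (\dim_K X * \dim K)%N.
  exact: dim_sup_field.
have leK (X Y : {subfield Om}) : (K <= X)%VS -> (K <= Y)%VS ->
    (\dim_K X <= \dim_K Y)%N -> (\dim X <= \dim Y)%N.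
  by move=> sX sY le; rewrite (dK X) // (dK Y) // leq_mul2r le orbT.
set k := \dim K.
have k0 : (0 < k)%N := adim_gt0 _.
have sKLtF : (K <= (Lt * F)%AS)%VS := subv_trans sKLt (field_subvMr Lt F).
have e1 : (\dim (Lt * F)%AS * k = \dim Lt * \dim F)%N.
  by rewrite (dK _ sKLtF) (dK _ sKLt) (dK _ sKF) dLtF; ring.
have N1 := natirr galK gF sKLt.
have eFLt : \dim (F :&: Lt)%AS = k.
  apply: (canc (adim_gt0 (Lt * F)%AS)); rewrite mulnC.
  move: N1; rewrite /= prodvC => N1.
  by rewrite -N1 mulnC -e1 mulnC.
have eFL : \dim (F :&: L)%AS = k.
  apply/eqP; rewrite eqn_leq -{1}eFLt dimvS /= ?capvS ?dimvS //.
  by rewrite subv_cap sKF sKL.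
have N2 := natirr galK gF sKL.
have e2 : (\dim (L * F)%AS * k = \dim F * \dim L)%N.
  by move: N2; rewrite eFL /= prodvC.
have sKFFL : (K <= (F * FL)%AS)%VS := subv_trans sKF (field_subvMr F FL).
have N3 := natirr galK gF sKFL.
have eFFL : \dim (F :&: FL)%AS = k.
  apply/eqP; rewrite eqn_leq -{1}eFL dimvS /= ?capvS ?dimvS //.
  by rewrite subv_cap sKF sKFL.
have gFFL := galois_prod galK gF gFL.
have sFFL_M : ((F * FL)%AS <= (L * F)%AS)%VS.
  by rewrite /= prodvC prodvSl.
have e3 : (\dim F * \dim FL <= \dim FM * k)%N.
  rewrite N3 eFFL leq_mul2r (leK _ _ sKFFL sKFM) ?orbT //.
  exact: maxFM.
pose A := (FM * F)%AS.
have gA : galois K A := galois_prod galK gFM gF.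
have sKA := gal_sub gA.
have sA_M : (A <= (L * F)%AS)%VS by rewrite prodv_sub // field_subvMl.
have sFA : (F <= A)%VS := field_subvMl FM F.
have sLFLtF : ((L * F)%AS <= (Lt * F)%AS)%VS by rewrite /= prodvSl.
have eLtA : \dim (Lt * A)%AS = \dim (Lt * F)%AS.
  congr (\dim _); apply/eqP; rewrite /= eqEsubv; apply/andP; split; last exact: prodvSr sFA.
  by apply: prodv_sub; [apply: field_subvMr | apply: subv_trans sA_M sLFLtF].
have eLtM : \dim (Lt * (L * F)%AS)%AS = \dim (Lt * F)%AS.
  congr (\dim _); apply/eqP; rewrite /= eqEsubv; apply/andP; split.
    by apply: prodv_sub; [apply: field_subvMr | exact: sLFLtF].
  by apply: prodvSr; apply: field_subvMl.
have sKM : (K <= (L * F)%AS)%VS := subv_trans sKL (field_subvMr L F).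
have N4 := natirr galK gLt sKA.
have N5 := natirr galK gLt sKM.
have eCapM : \dim (Lt :&: (L * F)%AS)%AS = \dim L.
  apply: (canc (adim_gt0 (Lt * F)%AS)); apply: (canc k0).
  rewrite eLtM in N5.
  transitivity (\dim Lt * (\dim (L * F)%AS * k))%N.
    by rewrite mulnA N5; ring.
  rewrite e2; transitivity ((\dim Lt * \dim F) * \dim L)%N; first ring.
  by rewrite -e1; ring.
have sLcap : (L <= (Lt :&: (L * F)%AS)%AS)%VS by rewrite /= subv_cap sLLt field_subvMr.
have capL : ((Lt :&: (L * F)%AS)%AS <= L)%VS.
  have := (dimv_leqif_eq sLcap).2; rewrite eCapM eqxx => /esym/eqP <-.
  exact: subvv.
pose I := (Lt :&: A)%AS.
have gI : galois K I := galois_cap galK gLt gA.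
have sIL : (I <= L)%VS.
  by apply: subv_trans capL; rewrite /= capvS.
have leI : (\dim I <= \dim FL)%N by apply: leK (gal_sub gI) sKFL (maxFL _ _ _).
have eA : (\dim A * k = \dim F * \dim I)%N.
  rewrite eLtA in N4.
  apply: (canc (adim_gt0 Lt)).
  transitivity ((\dim Lt * \dim A) * k)%N; first ring.
  rewrite N4; transitivity (\dim (Lt * F)%AS * k * \dim I)%N; first ring.
  by rewrite e1; ring.
have leFM : (\dim FM <= \dim A)%N by apply: dimvS; apply: field_subvMr.
have eFM : (\dim FM * k = \dim F * \dim FL)%N.
  apply/eqP; rewrite eqn_leq e3 andbT.
  apply: leq_trans (leq_mul leFM (leqnn k)) _.
  by rewrite eA leq_mul2l leI orbT.
rewrite /k in k0 e1 e2 e3 eFM eA eCapM.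
have dFM := dK _ sKFM; have dF := dK _ sKF; have dFL := dK _ sKFL.
split.
  rewrite /t_index; have kk : (0 < \dim K * \dim K)%N by rewrite muln_gt0 k0.
  apply: (canc kk).
  transitivity (\dim FM * \dim K)%N; first by rewrite {2}dFM; ring.
  by rewrite eFM {1}dF {1}dFL; ring.
rewrite /u_index.
have dM := dim_sup_field sFM_M; have dL := dim_sup_field sFL_L.
have fk : (0 < \dim FM * \dim K)%N by rewrite muln_gt0 k0 adim_gt0.
apply: (canc fk).
transitivity (\dim (L * F)%AS * \dim K)%N; first by rewrite {2}dM; ring.
rewrite e2 {1}dL; transitivity (\dim_FL L * (\dim F * \dim FL))%N; first ring.
by rewrite -eFM; ring.
Qed.
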